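(* Let $\ell\in V$ be a nonzero $1$-form, let $i,j\in[n]$ be distinct, and let $L$ be a subspace of $\bigwedge^{k}V$ such that $\ell\wedge y=0$ for all $y\in N_{j\to i}L$. Then $\ell\wedge(e_{i}-e_{j})\wedge x=0$ for all $x\in L$. Moreover, if $L$ is nontrivial (no nonzero $v\in V$ satisfies $v\wedge x=0$ for all $x\in L$), then $\ell\wedge(e_{i}-e_{j})\neq0$.
   Context: $\mathbb{F}$ is a field (assumed throughout the paper, for expository purposes, to have characteristic not $2$), $V$ is an $n$-dimensional $\mathbb{F}$-vector space with a fixed basis $e_1,\dots,e_n$, and $\bigwedge V$ its exterior algebra. For $j\in[n]$, $V^{(j)}$ is the span of $\{e_h:h\neq j\}$. Slow shift: for distinct $i,j\in[n]$ and nonzero $m\in\bigwedge^kV$, write uniquely $m=x+e_j\wedge y$ with $x\in\bigwedge^kV^{(j)}$, $y\in\bigwedge^{k-1}V^{(j)}$, and set $N_{j\to i}m=x+e_i\wedge y$ if this is nonzero, and $N_{j\to i}m=e_j\wedge y$ otherwise (the limit as $t\to0$ of the projective action of the linear map $e_j\mapsto e_i+te_j$ fixing the other $e_h$). For a subspace $L$ of $\bigwedge^kV$, $N_{j\to i}L$ is the span of $\{N_{j\to i}m:m\in L\setminus\{0\}\}$. *)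

(* Defs.v *)
From HB Require Import structures.
From mathcomp Require Import all_boot all_order all_algebra.
Set Implicit Arguments. Unset Strict Implicit. Unset Printing Implicit Defensive.
Import Order.TTheory GRing.Theory Num.Theory.
Local Open Scope ring_scope.

(* An element of /\V is represented by its coordinates in the standard basis
   e_S = e_{s1} /\ ... /\ e_{sm} (s1 < ... < sm), indexed by S : {set 'I_n}. *)
Definition ext (F : fieldType) (n : nat) := {ffun {set 'I_n} -> F^o}.

Section Ext.
Variables (F : fieldType) (n : nat).
Local Notation ext := (ext F n).

Definition ebas (S : {set 'I_n}) : ext := [ffun T => (T == S)%:R].

Definition evec (i : 'I_n) : ext := ebas [set i].

Definition ninv (S T : {set 'I_n}) : nat :=
  #|[set p : 'I_n * 'I_n | [&& p.1 \in S, p.2 \in T & (p.2 < p.1)%N]]|.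

Definition wedge_bas (S T : {set 'I_n}) : ext :=
  if [disjoint S & T] then (-1) ^+ ninv S T *: ebas (S :|: T) else 0.

Definition wedge (x y : ext) : ext :=
  \sum_(S : {set 'I_n}) \sum_(T : {set 'I_n}) (x S * y T) *: wedge_bas S T.

Definition is_form (k : nat) (x : ext) : Prop :=
  forall S : {set 'I_n}, x S != 0 -> #|S| = k.

(* decomposition m = x + e_j /\ y with x, y in /\ V^(j) *)
Definition dec_x (j : 'I_n) (m : ext) : ext :=
  [ffun S : {set 'I_n} => if j \in S then 0 else m S].
Definition dec_y (j : 'I_n) (m : ext) : ext :=
  [ffun T : {set 'I_n} => if j \in T then 0
             else (-1) ^+ #|[set t in T | (t < j)%N]| * m (j |: T)].

Definition slow_shift (i j : 'I_n) (m : ext) : ext :=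
  let z := dec_x j m + wedge (evec i) (dec_y j m) in
  if z != 0 then z else wedge (evec j) (dec_y j m).

Definition in_shift_span (i j : 'I_n) (L : {vspace ext}) (y : ext) : Prop :=
  exists (s : seq ext) (c : seq F),
    [/\ size c = size s,
        (forall m, m \in s -> (m \in L) /\ m != 0) &
        y = \sum_(r < size s) c`_r *: slow_shift i j s`_r].

Definition nontrivial (L : {vspace ext}) : Prop :=
  forall v : ext, is_form 1 v -> (forall x, x \in L -> wedge v x = 0) -> v = 0.

End Ext.

(* Main.v *)
Require Import Defs.
From HB Require Import structures.
From mathcomp Require Import all_boot all_order all_algebra.
Import GRing.Theory.
Local Open Scope ring_scope.
Set Implicit Arguments. Unset Strict Implicit.

Section Aux.
Variables (F : fieldType) (n : nat).
Local Notation ext := (ext F n).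
Local Notation wedge := (@wedge F n).
Implicit Types x y z : ext.

Lemma wedgeDl x y z : wedge (x + y) z = wedge x z + wedge y z.
Proof.
rewrite /wedge -big_split; apply eq_bigr => S _; rewrite -big_split.
by apply eq_bigr => T _ /=; rewrite ffunE mulrDl scalerDl.
Qed.

Lemma wedgeDr x y z : wedge x (y + z) = wedge x y + wedge x z.
Proof.
rewrite /wedge -big_split; apply eq_bigr => S _; rewrite -big_split.
by apply eq_bigr => T _ /=; rewrite ffunE mulrDr scalerDl.
Qed.

Lemma wedgeZl c x y : wedge (c *: x) y = c *: wedge x y.
Proof.
rewrite /wedge scaler_sumr; apply eq_bigr => S _; rewrite scaler_sumr.
by apply eq_bigr => T _ /=; rewrite ffunE scalerA mulrA.
Qed.

Lemma wedgeZr c x y : wedge x (c *: y) = c *: wedge x y.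
Proof.
rewrite /wedge scaler_sumr; apply eq_bigr => S _; rewrite scaler_sumr.
by apply eq_bigr => T _ /=; rewrite ffunE scalerA mulrCA.
Qed.

Lemma wedge0l y : wedge 0 y = 0.
Proof. by rewrite /wedge big1 // => S _; rewrite big1 // => T _; rewrite ffunE mul0r scale0r. Qed.
Lemma wedge0r x : wedge x 0 = 0.
Proof. by rewrite /wedge big1 // => S _; rewrite big1 // => T _; rewrite ffunE mulr0 scale0r. Qed.
Lemma wedgeNl x y : wedge (- x) y = - wedge x y.
Proof. by rewrite -scaleN1r wedgeZl scaleN1r. Qed.
Lemma wedgeNr x y : wedge x (- y) = - wedge x y.
Proof. by rewrite -scaleN1r wedgeZr scaleN1r. Qed.
Lemma wedgeBl x y z : wedge (x - y) z = wedge x z - wedge y z.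
Proof. by rewrite wedgeDl wedgeNl. Qed.
Lemma wedgeBr x y z : wedge x (y - z) = wedge x y - wedge x z.
Proof. by rewrite wedgeDr wedgeNr. Qed.

Lemma wedge_suml I (r : seq I) (P : pred I) (f : I -> ext) y :
  wedge (\sum_(i <- r | P i) f i) y = \sum_(i <- r | P i) wedge (f i) y.
Proof. exact: (big_morph (fun x => wedge x y) (fun a b => wedgeDl a b y) (wedge0l y)). Qed.
Lemma wedge_sumr I (r : seq I) (P : pred I) (f : I -> ext) x :
  wedge x (\sum_(i <- r | P i) f i) = \sum_(i <- r | P i) wedge x (f i).
Proof. exact: (big_morph (fun y => wedge x y) (fun a b => wedgeDr x a b) (wedge0r x)). Qed.

Lemma ext_expand x : x = \sum_S x S *: ebas F S.
Proof.
apply/ffunP => T; rewrite sum_ffunE (bigD1 T) //= big1 => [|S nST].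
  by rewrite !ffunE eqxx addr0 /=; exact: (esym (mulr1 _)).
by rewrite !ffunE eq_sym (negbTE nST) /=; exact: mulr0.
Qed.

Lemma wedge_ebasl A y : wedge (ebas F A) y = \sum_T y T *: wedge_bas F A T.
Proof.
rewrite /wedge (bigD1 A) //= [X in _ + X]big1 ?addr0.
  by apply eq_bigr => T _; rewrite ffunE eqxx mul1r.
by move=> S nSA; apply big1 => T _; rewrite ffunE (negbTE nSA) mul0r scale0r.
Qed.

Lemma wedge_ebas (A B : {set 'I_n}) : wedge (ebas F A) (ebas F B) = wedge_bas F A B.
Proof.
rewrite wedge_ebasl (bigD1 B) //= [X in _ + X]big1 ?addr0 ?ffunE ?eqxx ?scale1r // => T nTB.
by rewrite ffunE (negbTE nTB) scale0r.
Qed.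

Lemma wedge_bilin x y :
  wedge x y = \sum_S \sum_T (x S * y T) *: wedge (ebas F S) (ebas F T).
Proof. by apply eq_bigr => S _; apply eq_bigr => T _; rewrite wedge_ebas. Qed.

Lemma disjUl (S T U : {set 'I_n}) :
  [disjoint S :|: T & U] = [disjoint S & U] && [disjoint T & U].
Proof. by rewrite -!setI_eq0 setIUl setU_eq0. Qed.
Lemma disjUr (S T U : {set 'I_n}) :
  [disjoint S & T :|: U] = [disjoint S & T] && [disjoint S & U].
Proof. by rewrite -!setI_eq0 setIUr setU_eq0. Qed.

Lemma ninvUl (S T U : {set 'I_n}) : [disjoint S & T] ->
  ninv (S :|: T) U = (ninv S U + ninv T U)%N.
Proof.
move=> dST; rewrite /ninv.
have -> : [set p : 'I_n * 'I_n | [&& p.1 \in S :|: T, p.2 \in U & (p.2 < p.1)%N]] =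
  [set p : 'I_n * 'I_n | [&& p.1 \in S, p.2 \in U & (p.2 < p.1)%N]] :|:
  [set p : 'I_n * 'I_n | [&& p.1 \in T, p.2 \in U & (p.2 < p.1)%N]].
  apply/setP => p; rewrite !inE.
  by case: (p.1 \in S); case: (p.1 \in T); case: (p.2 \in U); case: (p.2 < p.1)%N.
rewrite cardsU (_ : _ :&: _ = set0) ?cards0 ?subn0 //.
apply/setP => p; rewrite !inE.
case pS: (p.1 \in S) => //=; by rewrite (disjointFr dST pS) !andbF.
Qed.

Lemma ninvUr (S T U : {set 'I_n}) : [disjoint T & U] ->
  ninv S (T :|: U) = (ninv S T + ninv S U)%N.
Proof.
move=> dTU; rewrite /ninv.
have -> : [set p : 'I_n * 'I_n | [&& p.1 \in S, p.2 \in T :|: U & (p.2 < p.1)%N]] =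
  [set p : 'I_n * 'I_n | [&& p.1 \in S, p.2 \in T & (p.2 < p.1)%N]] :|:
  [set p : 'I_n * 'I_n | [&& p.1 \in S, p.2 \in U & (p.2 < p.1)%N]].
  apply/setP => p; rewrite !inE.
  by case: (p.1 \in S); case: (p.2 \in T); case: (p.2 \in U); case: (p.2 < p.1)%N.
rewrite cardsU (_ : _ :&: _ = set0) ?cards0 ?subn0 //.
apply/setP => p; rewrite !inE.
case pT: (p.2 \in T); rewrite ?andbF //= (disjointFr dTU pT).
by rewrite !andbF.
Qed.

Lemma wb_assoc (S T U : {set 'I_n}) :
  wedge (wedge_bas F S T) (ebas F U) = wedge (ebas F S) (wedge_bas F T U).
Proof.
rewrite /wedge_bas; case dST: [disjoint S & T]; case dTU: [disjoint T & U];
  rewrite ?wedge0l ?wedge0r ?wedgeZl ?wedgeZr ?wedge_ebas /wedge_bas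
    ?disjUl ?disjUr ?dST ?dTU ?andbF ?scaler0 //=.
case: [disjoint S & U]; rewrite ?scaler0 //.
rewrite !scalerA -!exprD setUA ninvUl // ninvUr //.
by rewrite [(ninv T U + _)%N]addnC addnA.
Qed.

Lemma wedgeA x y z : wedge (wedge x y) z = wedge x (wedge y z).
Proof.
rewrite (wedge_bilin x y) wedge_suml.
under eq_bigr => S _ do rewrite wedge_suml.
under eq_bigr => S _ do under eq_bigr => T _ do
  rewrite wedgeZl {1}(ext_expand z) wedge_sumr.
rewrite (ext_expand x) wedge_suml; apply eq_bigr => S _.
rewrite (wedge_bilin y z) wedgeZl wedge_sumr scaler_sumr; apply eq_bigr => T _.
rewrite wedge_sumr !scaler_sumr; apply eq_bigr => U _.
rewrite wedgeZr wedgeZr !wedge_ebas wb_assoc -wedge_ebas.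
by rewrite -ext_expand !scalerA mulrA.
Qed.

Lemma ninv1 (a : 'I_n) (T : {set 'I_n}) :
  ninv [set a] T = #|[set t in T | (t < a)%N]|.
Proof.
rewrite /ninv -(card_imset [set t in T | (t < a)%N] (fun t1 t2 (e : (a, t1) = (a, t2)) => congr1 snd e)).
apply: eq_card => -[p q]; rewrite !inE /=.
apply/idP/imsetP => [/and3P [/eqP -> qT qa]|[t]].
  by exists q => //; rewrite inE qT.
by rewrite inE => /andP [tT ta] [-> ->]; rewrite eqxx tT ta.
Qed.

Lemma wedge_evecE (a : 'I_n) z (S : {set 'I_n}) :
  (wedge (evec F a) z) S =
  if a \in S then (-1) ^+ #|[set t in S :\ a | (t < a)%N]| * z (S :\ a) else 0.
Proof.
rewrite /evec wedge_ebasl sum_ffunE.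
have E : forall T, (z T *: wedge_bas F [set a] T) S =
    if (a \notin T) && (S == a |: T) then (-1) ^+ ninv [set a] T * z T else 0.
  move=> T; rewrite /wedge_bas disjoints1.
  case: (a \in T) => /=; rewrite ?scaler0 ?ffunE //.
  case: (S == a |: T) => /=; rewrite /GRing.scale /= ?mulr0 ?mulr1 //; by rewrite mulrC.
under eq_bigr => T _ do rewrite E.
case aS: (a \in S).
  rewrite (bigD1 (S :\ a)) //= [X in _ + X]big1 ?addr0.
    by rewrite !inE eqxx /= setD1K // eqxx ninv1.
  move=> T nT; case aT: (a \in T) => //=; case: eqP => // eS.
  by rewrite eS setU1K ?aT ?eqxx in nT.
rewrite big1 // => T _; case: (a \in T) => //=; case: eqP => // eS.
by rewrite eS setU11 in aS.
Qed.

Lemma decomp (j : 'I_n) m : m = dec_x j m + wedge (evec F j) (dec_y j m).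
Proof.
apply/ffunP => S; rewrite ffunE wedge_evecE !ffunE.
case jS: (j \in S); last by rewrite addr0.
rewrite add0r !inE eqxx /= setD1K // mulrA -expr2 sqrr_sign mul1r.
done.
Qed.

Lemma ninv11 (a b : 'I_n) : ninv [set a] [set b] = (b < a)%N.
Proof.
rewrite ninv1; case: ltnP => h.
  rewrite (_ : [set t in [set b] | (t < a)%N] = [set b]) ?cards1 //.
  by apply/setP => t; rewrite !inE; case: eqP => // ->.
rewrite (_ : [set t in [set b] | (t < a)%N] = set0) ?cards0 //.
apply/setP => t; rewrite !inE; case: eqP => // ->.
by rewrite ltnNge h.
Qed.

Lemma evec_anti (a b : 'I_n) :
  wedge (evec F a) (evec F b) = - wedge (evec F b) (evec F a).
Proof.
rewrite /evec !wedge_ebas /wedge_bas !disjoints1 !inE.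
case: (eqVneq a b) => [->|ab]; first by rewrite oppr0.
rewrite /= setUC !ninv11 -scaleNr; congr (_ *: _).
case: (ltngtP a b) => h; [by rewrite /= expr0 expr1 opprK | by rewrite /= expr0 expr1 | by move: ab; rewrite (val_inj h) eqxx].
Qed.

Lemma evec_nil (a : 'I_n) : wedge (evec F a) (evec F a) = 0.
Proof. by rewrite /evec wedge_ebas /wedge_bas disjoints1 inE eqxx. Qed.

Lemma form1_expand l : is_form 1 l -> l = \sum_(a : 'I_n) l [set a] *: evec F a.
Proof.
move=> Hl; apply/ffunP => T; rewrite sum_ffunE.
case: (boolP (#|T| == 1%N)) => [/cards1P [b ->]| nT].
  rewrite (bigD1 b) //= [X in _ + X]big1 => [|a nab]; rewrite !ffunE.
    by rewrite eqxx addr0 /GRing.scale /= mulr1.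
  rewrite (inj_eq set1_inj) eq_sym (negbTE nab) /GRing.scale /=; exact: mulr0.
have -> : l T = 0.
  by apply/eqP; apply: contraR nT => /Hl ->.
rewrite big1 // => a _; rewrite !ffunE.
have -> : (T == [set a]) = false.
  by apply/negbTE; apply: contraNneq nT => ->; rewrite cards1.
rewrite /GRing.scale /=; exact: mulr0.
Qed.

Lemma form1_anti (l v : ext) : is_form 1 l -> is_form 1 v -> wedge l v = - wedge v l.
Proof.
have E : forall u u' : ext,
  wedge (\sum_(a : 'I_n) u [set a] *: evec F a) (\sum_(b : 'I_n) u' [set b] *: evec F b) =
  \sum_(a : 'I_n) \sum_(b : 'I_n) (u [set a] * u' [set b]) *: wedge (evec F a) (evec F b).
  move=> u u'; rewrite wedge_suml; apply eq_bigr => a _.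
  rewrite wedgeZl wedge_sumr scaler_sumr; apply eq_bigr => b _.
  by rewrite wedgeZr scalerA.
move=> /form1_expand -> /form1_expand ->.
rewrite !E exchange_big /= -sumrN; apply eq_bigr => a _.
rewrite -sumrN; apply eq_bigr => b _.
by rewrite evec_anti scalerN mulrC.
Qed.

Lemma evec_form (a : 'I_n) : is_form 1 (evec F a).
Proof.
move=> S; rewrite ffunE; case: (eqVneq S [set a]) => [->|nS]; first by rewrite cards1.
by rewrite ?(negbTE nS) eqxx.
Qed.

Lemma is_formB k (u v : ext) : is_form k u -> is_form k v -> is_form k (u - v).
Proof.
move=> Hu Hv S; rewrite !ffunE => H.
case: (eqVneq (u S) 0) => [u0|]; last exact: Hu.
apply: Hv; apply: contraNneq H => v0.
by rewrite u0 v0 subr0.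
Qed.

End Aux.

Theorem lemma5p4 (F : fieldType) (n k : nat) (l : ext F n) (i j : 'I_n)
    (L : {vspace ext F n}) :
  2%:R != 0 :> F ->
  is_form 1 l -> l != 0 -> i != j ->
  (forall x, x \in L -> is_form k x) ->
  (forall y, in_shift_span i j L y -> wedge l y = 0) ->
  (forall x, x \in L -> wedge (wedge l (evec F i - evec F j)) x = 0) /\
  (nontrivial L -> wedge l (evec F i - evec F j) != 0).
Proof.
move=> _ Hl1 l0 ij _ Hy.
set w := evec F i - evec F j.
have w1 : is_form 1 w := is_formB (@evec_form F n i) (@evec_form F n j).
have ww : wedge w w = 0.
  by rewrite /w wedgeBl !wedgeBr !evec_nil (@evec_anti F n j i) sub0r subr0 subrr.
have key : forall m, m \in L -> exists A yy, m = A - wedge w yy /\ wedge l A = 0.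
  move=> m mL; exists (dec_x j m + wedge (evec F i) (dec_y j m)), (dec_y j m); split.
    rewrite /w wedgeBl opprB {1}(@decomp F n j m) addrA.
    by rewrite -(addrA (dec_x j m)) (addrC (wedge (evec F i) _)) addrA addrK.
  case: (eqVneq (dec_x j m + wedge (evec F i) (dec_y j m)) 0) => [->|A0].
    by rewrite wedge0r.
  apply: Hy; exists [:: m], [:: 1]; split => //.
    move=> m'; rewrite inE => /eqP ->; split => //.
    apply: contraNneq A0 => ->.
    have -> : dec_x j (0 : ext F n) = 0 by apply/ffunP => S; rewrite !ffunE; case: ifP.
    have -> : dec_y j (0 : ext F n) = 0.
      by apply/ffunP => S; rewrite !ffunE; case: ifP => // _; rewrite mulr0.
    by rewrite wedge0r addr0.
  by rewrite big_ord1 /= scale1r /slow_shift /= A0.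
split.
  move=> m /key [A [yy [-> HA]]].
  rewrite wedgeBr.
  have -> : wedge (wedge l w) (wedge w yy) = 0.
    by rewrite wedgeA -(wedgeA w w) ww wedge0l wedge0r.
  by rewrite (form1_anti Hl1 w1) wedgeNl wedgeA HA wedge0r oppr0 addr0.
move=> Hnt; apply/negP => /eqP lw0; move/eqP: l0; apply.
apply: Hnt Hl1 _ => m /key [A [yy [-> HA]]].
by rewrite wedgeBr HA -wedgeA lw0 wedge0l subrr.
Qed.
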